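(* Let $\lambda\in\mathcal P_\epsilon(N)$ and let $\mathbf i=(i_1,\dots,i_l)$ be an admissible sequence for $\lambda$; if $\epsilon=1$ assume in addition that $N-2\sum_{j=1}^l i_j\ne2$. Then $(i_{\sigma(1)},\dots,i_{\sigma(l)})$ is an admissible sequence for $\lambda$ for every permutation $\sigma$ of $\{1,\dots,l\}$.
   Context: $\mathcal P_\epsilon(N)$ ($\epsilon=\pm1$) is the set of partitions $\lambda=(\lambda_1\ge\dots\ge\lambda_n\ge1)$ of $N$ in which every part $m$ with $\epsilon(-1)^m=1$ occurs with even multiplicity; conventions $\lambda_0=0$, $\lambda_i=0$ for $i>n$. A 2-step of $\lambda$ is a pair $(i,i+1)$, $1\le i<n$, with $\epsilon(-1)^{\lambda_i}=\epsilon(-1)^{\lambda_{i+1}}=-1$, $\lambda_{i-1}\ne\lambda_i$, $\lambda_{i+1}\ne\lambda_{i+2}$; $\Delta(\lambda)$ is the set of 2-steps. KS algorithm: for $1\le i\le n$, Case 1 occurs at $i$ if $\lambda_i\ge\lambda_{i+1}+2$, and then $\lambda^{(i)}=(\lambda_1-2,\dots,\lambda_i-2,\lambda_{i+1},\dots,\lambda_n)$; Case 2 occurs at $i$ if $(i,i+1)\in\Delta(\lambda)$ and $\lambda_i=\lambda_{i+1}$, and then $\lambda^{(i)}=(\lambda_1-2,\dots,\lambda_{i-1}-2,\lambda_i-1,\lambda_{i+1}-1,\lambda_{i+2},\dots,\lambda_n)$; zero parts discarded, $\lambda^{(i)}\in\mathcal P_\epsilon(N-2i)$. A sequence $(i_1,\dots,i_l)$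 is admissible for $\lambda$ if for each $k$ Case 1 or Case 2 occurs at $i_k$ for $\lambda^{(i_1,\dots,i_{k-1})}$, where $\lambda^\emptyset=\lambda$ and $\lambda^{(i_1,\dots,i_k)}=(\lambda^{(i_1,\dots,i_{k-1})})^{(i_k)}$. *)

(* Defs.v *)
From mathcomp Require Import all_boot all_fingroup.
Set Implicit Arguments. Unset Strict Implicit. Unset Printing Implicit Defensive.

(* The sign epsilon = +1 / -1 is encoded by a boolean [epsp]:
   epsp = true  <-> epsilon = +1,  epsp = false <-> epsilon = -1. *)

(* epsilon * (-1)^m = 1 *)
Definition sgn_pos (epsp : bool) (m : nat) : bool :=
  if epsp then ~~ odd m else odd m.
(* epsilon * (-1)^m = -1 *)
Definition sgn_neg (epsp : bool) (m : nat) : bool :=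
  if epsp then odd m else ~~ odd m.

(* A partition is a seq nat (lambda_1, ..., lambda_n); 1-indexed access
   with conventions lambda_0 = 0 and lambda_i = 0 for i > n. *)
Definition part (lam : seq nat) (i : nat) : nat :=
  if i is i'.+1 then nth 0 lam i' else 0.

Definition inP (epsp : bool) (N : nat) (lam : seq nat) : bool :=
  [&& sorted geq lam, all (fun m => 0 < m) lam, sumn lam == N &
      all (fun m => sgn_pos epsp m ==> ~~ odd (count_mem m lam)) lam].

Definition two_step (epsp : bool) (lam : seq nat) (i : nat) : bool :=
  [&& 1 <= i, i < size lam,
      sgn_neg epsp (part lam i), sgn_neg epsp (part lam i.+1),
      part lam i.-1 != part lam i &
      part lam i.+1 != part lam i.+2].

Definition case1 (lam : seq nat) (i : nat) : bool :=
  [&& 1 <= i, i <= size lam & part lam i.+1 + 2 <= part lam i].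

Definition case2 (epsp : bool) (lam : seq nat) (i : nat) : bool :=
  two_step epsp lam i && (part lam i == part lam i.+1).

Definition step1 (lam : seq nat) (i : nat) : seq nat :=
  filter (fun m => 0 < m)
    (mkseq (fun k => if k.+1 <= i then part lam k.+1 - 2 else part lam k.+1)
           (size lam)).

Definition step2 (lam : seq nat) (i : nat) : seq nat :=
  filter (fun m => 0 < m)
    (mkseq (fun k => if k.+1 < i then part lam k.+1 - 2
                     else if k.+1 <= i.+1 then part lam k.+1 - 1
                     else part lam k.+1)
           (size lam)).

(* The KS step: Case 1 and Case 2 are mutually exclusive. *)
Definition ks_step (epsp : bool) (lam : seq nat) (i : nat) : seq nat :=
  if case1 lam i then step1 lam i else step2 lam i.

Fixpoint admissible (epsp : bool) (lam : seq nat) (s : seq nat) : bool :=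
  match s with
  | [::] => true
  | i :: s' => (case1 lam i || case2 epsp lam i) &&
               admissible epsp (ks_step epsp lam i) s'
  end.

Definition permute_seq (s : seq nat) (sigma : 'S_(size s)) : seq nat :=
  [seq nth 0 s (sigma k) | k <- enum 'I_(size s)].

(* Main.v *)
Require Import Defs.
From mathcomp Require Import all_boot all_fingroup zify.

Definition typ (f : nat -> nat) i := f i.+1 + 2 <= f i.
Definition Fv e (f : nat -> nat) i :=
  ((1 <= i) && (0 < f i) && (f i.+1 + 2 <= f i)) ||
  [&& 1 <= i, 0 < f i.+1, sgn_neg e (f i), sgn_neg e (f i.+1),
      f i.-1 != f i, f i.+1 != f i.+2 & f i == f i.+1].
Definition Fks (f : nat -> nat) i k :=
  if typ f i then (if k <= i then f k - 2 else f k)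
  else (if k < i then f k - 2 else if k <= i.+1 then f k - 1 else f k).

Lemma Fks_lt f i p : p < i -> Fks f i p = f p - 2.
Proof. rewrite /Fks => H; repeat case: ifP; lia. Qed.
Lemma Fks_gt f i p : i.+1 < p -> Fks f i p = f p.
Proof. rewrite /Fks => H; repeat case: ifP; lia. Qed.
Lemma Fks_ii f i p : p = i -> Fks f i p = if typ f i then f i - 2 else f i - 1.
Proof. move=> ->; rewrite /Fks /typ; repeat case: ifP; lia. Qed.
Lemma Fks_ii1 f i p : p = i.+1 -> Fks f i p = if typ f i then f i.+1 else f i.+1 - 1.
Proof. move=> ->; rewrite /Fks /typ; repeat case: ifP; lia. Qed.

Ltac rwF := repeat match goal with
 | |- context [Fks ?f ?i ?p] =>
   first [ rewrite (Fks_lt f i p); [|lia] | rewrite (Fks_gt f i p); [|lia]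
         | rewrite (Fks_ii f i p); [|lia] | rewrite (Fks_ii1 f i p); [|lia] ]
 end.

Ltac bdestr := repeat match goal with
 | H : is_true (_ && _) |- _ => let x := fresh "h" in let y := fresh "h" in case/andP: H => x y
 | H : is_true (_ || _) |- _ => let x := fresh "h" in case/orP: H => x
 end.
Ltac go := repeat (match goal with
 | |- context [if ?c then _ else _] => let E := fresh "E" in destruct c eqn:E
 end); intros; bdestr; lia.

Ltac decide_ifs := repeat match goal with |- context [if ?c then _ else _] =>
  first [ have ->: c = true by lia | have ->: c = false by lia | let E := fresh "E" in destruct c eqn:E ] end.
Lemma odd_sub2 x : x != 1 -> odd (x - 2) = odd x.
Proof. case: x => [|[|x]] //= _. rewrite !subSS subn0 /=. by rewrite negbK. Qed.
Lemma odd_sub1 x : 0 < x -> odd (x - 1) = ~~ odd x.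
Proof. case: x => [|x] //= _. rewrite subSS subn0. by rewrite negbK. Qed.
Ltac par := repeat match goal with
 | |- context [odd (?x - 2)] => rewrite (odd_sub2 x); [|lia]
 | |- context [odd (?x - 1)] => rewrite (odd_sub1 x); [|lia]
 end;
 repeat match goal with
 | |- context [odd (?F ?p)] => lazymatch F with subn _ => fail | _ =>
     let o := fresh "o" in set (o := odd (F p)) in *; clearbody o end
 end.
Ltac fin := rewrite /Fv /typ /sgn_neg /=; rwF; rewrite /typ; intro; bdestr; decide_ifs; par.
Ltac fin2 := intro; bdestr; (split; [|split; [|split]]); lia.
Ltac mk f x y := let H := fresh "M" in
  have H : 0 < x -> x <= y -> f y <= f x by move=> ? ?; apply: (_ : forall x y, 0 < x <= y -> f y <= f x); [eassumption|lia].

Lemma core e f i j : f 0 = 0 -> (forall x y, 0 < x <= y -> f y <= f x) -> i != j ->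
  Fv e f i -> Fv e (Fks f i) j ->
  Fv e f j /\ Fv e (Fks f j) i /\ typ f i = typ (Fks f j) i /\ typ (Fks f i) j = typ f j.
Proof.
move=> f0 mono.
case: i => [|a]; first by move=> _; rewrite /Fv => /orP[/andP[/andP[]]|/andP[]].
case: j => [|b] neq Hi; first by rewrite /Fv => /orP[/andP[/andP[]]|/andP[]].
move: Hi.
have Ha : a = 0 -> f a = 0 by move->.
have Hb : b = 0 -> f b = 0 by move->.
have M1 : 0 < a -> f a.+1 <= f a by move=> ?; apply: mono; lia.
have M2 : f a.+2 <= f a.+1 by apply: mono; lia.
have M3 : f a.+3 <= f a.+2 by apply: mono; lia.
have M4 : 0 < b -> f b.+1 <= f b by move=> ?; apply: mono; lia.
have M5 : f b.+2 <= f b.+1 by apply: mono; lia.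
have M6 : f b.+3 <= f b.+2 by apply: mono; lia.
have M7 : b.+3 <= a -> f a <= f b.+3 by move=> ?; apply: mono; lia.
have M8 : a.+3 <= b -> f b <= f a.+3 by move=> ?; apply: mono; lia.
have [H|[H|[H|[H|[H|H]]]]] : b.+3 <= a \/ b.+2 = a \/ b.+1 = a \/ a.+1 = b \/ a.+2 = b \/ a.+3 <= b by lia.
- by case: e; fin; fin2.
- subst a; by case: e; fin; fin2.
- subst a; by case: e; fin; fin2.
- subst b; by case: e; fin; fin2.
- subst b; by case: e; fin; fin2.
- by case: e; fin; fin2.
Qed.

Set Implicit Arguments. Unset Strict Implicit.
Lemma geq_trans : transitive geq.
Proof. move=> y x z /= H1 H2; exact: leq_trans H2 H1. Qed.

Definition good (lam : seq nat) := sorted geq lam && all (fun m => 0 < m) lam.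

Lemma part_size lam i : good lam -> 0 < i -> (i <= size lam) = (0 < part lam i).
Proof.
case/andP=> _ /allP Hp; case: i => [//|i] _ /=.
case: ltnP => H.
- by rewrite Hp // mem_nth.
- by rewrite nth_default.
Qed.

Lemma part_mono lam x y : good lam -> 0 < x <= y -> part lam y <= part lam x.
Proof.
case/andP=> Hs _; case: x => [//|x]; case: y => [//|y] /= Hxy.
case: (ltnP y (size lam)) => Hy; last by rewrite nth_default.
have Hx : x < size lam by lia.
exact: (sorted_leq_nth geq_trans leqnn 0 Hs).
Qed.

Lemma nth_filter_pos (s : seq nat) k : sorted geq s ->
  nth 0 [seq m <- s | 0 < m] k = nth 0 s k.
Proof.
elim: s k => [|x s IH] k //= Hs.
have Hs' : sorted geq s by move: Hs; case: s {IH} => //= y s /andP[].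
case: ifP => Hx.
- case: k => [|k] //=; exact: IH.
- have x0 : x = 0 by lia.
  have : all (fun m => m == 0) s.
    apply/allP=> y Hy.
    have := (order_path_min geq_trans Hs); move/allP/(_ y Hy). lia.
  move=> /allP Hz.
  rewrite (@eq_in_filter _ _ pred0) ?filter_pred0; last by move=> y /Hz /eqP ->.
  case: k => [|k] /=; first by rewrite x0.
  case: (ltnP k (size s)) => Hk; last by rewrite nth_default.
  by apply/esym/eqP/Hz/mem_nth.
Qed.

Lemma good_eq l1 l2 : good l1 -> good l2 -> (forall k, part l1 k = part l2 k) -> l1 = l2.
Proof.
move=> G1 G2 H.
have Hn : forall l k, good l -> (k < size l) = (0 < nth 0 l k).
  by move=> l k G; rewrite (@part_size l k.+1 G).
have Hs : size l1 = size l2.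
  apply/eqP; rewrite eqn_leq; apply/andP; split; rewrite leqNgt; apply/negP=> Hlt.
  - by move: Hlt; rewrite (Hn _ _ G1) -[nth _ _ _]/(part l1 (size l2).+1) H /= -(Hn _ _ G2) ltnn.
  - by move: Hlt; rewrite (Hn _ _ G2) -[nth _ _ _]/(part l2 (size l1).+1) -H /= -(Hn _ _ G1) ltnn.
apply: (eq_from_nth (x0 := 0) Hs) => k _; exact: (H k.+1).
Qed.

Definition valid e lam i := case1 lam i || case2 e lam i.

Lemma Fv_ext e f g i : (forall k, f k = g k) -> Fv e f i = Fv e g i.
Proof. by move=> H; rewrite /Fv !H. Qed.

Lemma Fks_ext f g i k : (forall k, f k = g k) -> Fks f i k = Fks g i k.
Proof. by move=> H; rewrite /Fks /typ !H. Qed.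

Lemma valid_Fv e lam i : good lam -> valid e lam i = Fv e (part lam) i.
Proof.
move=> G; rewrite /valid /case1 /case2 /two_step /Fv.
case: i => [|i] //.
rewrite (@part_size lam (i.+1) G) // (@part_size lam (i.+2) G) //.
by rewrite !andbA.
Qed.

Lemma Fks_mono e f i x : f 0 = 0 -> (forall x y, 0 < x <= y -> f y <= f x) ->
  Fv e f i -> 0 < x -> Fks f i x.+1 <= Fks f i x.
Proof.
move=> f0 mono.
case: i => [|a]; first by rewrite /Fv => /orP[/andP[/andP[]]|/andP[]].
move=> Hv Hx.
have M1 : 0 < a -> f a.+1 <= f a by move=> ?; apply: mono; lia.
have M2 : f a.+2 <= f a.+1 by apply: mono; lia.
have M3 : f a.+3 <= f a.+2 by apply: mono; lia.
have M4 : f x.+1 <= f x by apply: mono; lia.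
have [H|[H|[H|[H|H]]]] : x < a \/ x = a \/ x = a.+1 \/ x = a.+2 \/ a.+2 < x by lia.
- move: Hv; rewrite /Fv /sgn_neg /=; rwF; rewrite /typ => Hv; bdestr; repeat case: ifP; lia.
- subst x; move: Hv; rewrite /Fv /sgn_neg /=; rwF; rewrite /typ => Hv; bdestr; repeat case: ifP; lia.
- subst x; move: Hv; rewrite /Fv /sgn_neg /=; rwF; rewrite /typ => Hv; bdestr; repeat case: ifP; lia.
- subst x; move: Hv; rewrite /Fv /sgn_neg /=; rwF; rewrite /typ => Hv; bdestr; repeat case: ifP; lia.
- move: Hv; rewrite /Fv /sgn_neg /=; rwF; rewrite /typ => Hv; bdestr; repeat case: ifP; lia.
Qed.

Lemma Fv_pos e f i : Fv e f i -> 0 < i.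
Proof. by rewrite /Fv => /orP[/andP[/andP[]]|/andP[]]. Qed.

Lemma ks_typ e lam i : good lam -> valid e lam i -> case1 lam i = typ (part lam) i.
Proof.
move=> G V; have Hv : Fv e (part lam) i by rewrite -valid_Fv.
have Hi := Fv_pos Hv.
case: i Hi Hv V => [//|i] _ Hv _.
rewrite /case1 (@part_size lam i.+1 G) //.
move: Hv; rewrite /Fv /typ /= => H; bdestr; lia.
Qed.

Lemma ks_eq e lam i : good lam -> valid e lam i ->
  ks_step e lam i = [seq m <- mkseq (fun k => Fks (part lam) i k.+1) (size lam) | 0 < m].
Proof.
move=> G V; rewrite /ks_step (ks_typ G V) /step1 /step2 /Fks.
by case: (typ _ _).
Qed.

Lemma ks_sorted e lam i : good lam -> valid e lam i ->
  sorted geq (mkseq (fun k => Fks (part lam) i k.+1) (size lam)).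
Proof.
move=> G V; have Hv := V; rewrite valid_Fv // in Hv.
apply/(sortedP 0) => m; rewrite size_mkseq => Hm.
rewrite !nth_mkseq //; last lia.
apply: (Fks_mono (e := e)) => //.
by move=> x y; apply: part_mono.
Qed.

Lemma ks_part e lam i k : good lam -> valid e lam i ->
  part (ks_step e lam i) k = Fks (part lam) i k.
Proof.
move=> G V; have Hi := Fv_pos (etrans (esym (@valid_Fv e lam i G)) V).
rewrite (ks_eq G V).
case: k => [|k].
  by rewrite /Fks /=; repeat case: ifP; lia.
rewrite /= nth_filter_pos; last exact: (ks_sorted G V).
case: (ltnP k (size lam)) => Hk; first by rewrite nth_mkseq.
rewrite nth_default ?size_mkseq //.
have H0 : nth 0 lam k = 0 by rewrite nth_default.
by rewrite /Fks /= H0; repeat case: ifP; lia.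
Qed.

Lemma good_ks e lam i : good lam -> valid e lam i -> good (ks_step e lam i).
Proof.
move=> G V; rewrite (ks_eq G V) /good filter_all andbT.
exact: (sorted_filter geq_trans _ (ks_sorted G V)).
Qed.

Definition Fksb (t : bool) (f : nat -> nat) i k :=
  if t then (if k <= i then f k - 2 else f k)
  else (if k < i then f k - 2 else if k <= i.+1 then f k - 1 else f k).
Lemma FksE f i k : Fks f i k = Fksb (typ f i) f i k.
Proof. by []. Qed.

Lemma Fks_comm f i j : typ f i = typ (Fks f j) i -> typ (Fks f i) j = typ f j ->
  forall k, Fks (Fks f i) j k = Fks (Fks f j) i k.
Proof.
move=> E1 E2 k.
rewrite [LHS]FksE E2 [RHS]FksE -E1 /Fksb !FksE /Fksb.
case: (typ f i); case: (typ f j); repeat case: ifP; lia.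
Qed.

Lemma swap e lam i j : good lam -> i != j -> valid e lam i -> valid e (ks_step e lam i) j ->
  [/\ valid e lam j, valid e (ks_step e lam j) i &
      ks_step e (ks_step e lam i) j = ks_step e (ks_step e lam j) i].
Proof.
move=> G ne Vi Vj.
have G1 := good_ks G Vi.
have Hfi : Fv e (part lam) i by rewrite -valid_Fv.
have Hgj : Fv e (Fks (part lam) i) j.
  by rewrite -(Fv_ext _ _ (fun k => ks_part k G Vi)) -valid_Fv.
have mono : forall x y, 0 < x <= y -> part lam y <= part lam x by move=> x y; apply: part_mono.
have [A [B [C D]]] := core e (part lam) i j (erefl 0) mono ne Hfi Hgj.
have Vj' : valid e lam j by rewrite valid_Fv.
have G2 := good_ks G Vj'.
have Vi' : valid e (ks_step e lam j) i.
  by rewrite valid_Fv // (Fv_ext _ _ (fun k => ks_part k G Vj')).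
split => //.
apply: good_eq (good_ks G1 Vj) (good_ks G2 Vi') _ => k.
rewrite !ks_part // (Fks_ext _ _ (fun k => ks_part k G Vi)).
rewrite (Fks_ext _ _ (fun k => ks_part k G Vj')).
exact: Fks_comm.
Qed.

Lemma adm_swap e lam i j s : good lam -> admissible e lam (i :: j :: s) ->
  admissible e lam (j :: i :: s).
Proof.
move=> G /= /andP[Vi /andP[Vj A]].
case: (eqVneq i j) => [eq|ne]; first by subst j; rewrite /= Vi Vj A.
have [V1 V2 E] := swap G ne Vi Vj.
apply/andP; split; first exact: V1.
apply/andP; split; first exact: V2.
by rewrite -E.
Qed.

Lemma adm_move e x u1 u2 lam : good lam -> admissible e lam (x :: u1 ++ u2) ->
  admissible e lam (u1 ++ x :: u2).
Proof.
elim: u1 lam => [//|y u1 IH] lam G H.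
move: (adm_swap G H) => /= /andP[Vy A].
rewrite Vy /=; apply: IH => //; exact: good_ks.
Qed.

Lemma adm_perm e s t lam : good lam -> perm_eq s t -> admissible e lam s ->
  admissible e lam t.
Proof.
elim: s t lam => [|x s IH] t lam G.
  by move=> /perm_size; case: t.
move=> Hp /= /andP[Vx A].
have xt : x \in t by rewrite -(perm_mem Hp) mem_head.
case/splitPr: xt Hp => t1 t2 Hp.
apply: adm_move => //; rewrite /= Vx /=.
apply: IH (good_ks G Vx) _ A.
rewrite -(perm_cons x); apply: (perm_trans Hp).
by rewrite -cat1s perm_catCA.
Qed.

Lemma permute_perm (s : seq nat) (sigma : 'S_(size s)) : perm_eq (permute_seq sigma) s.
Proof.
rewrite /permute_seq.
apply/(perm_iotaP 0); exists [seq val (sigma k) | k <- enum 'I_(size s)]; last first.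
  by rewrite -map_comp.
rewrite -val_enum_ord (map_comp val sigma); apply: perm_map.
apply: uniq_perm; first by rewrite map_inj_uniq ?enum_uniq //; exact: perm_inj.
  exact: enum_uniq.
move=> x; rewrite mem_enum; apply/mapP; exists (sigma^-1 x)%g; first by rewrite mem_enum.
by rewrite permKV.
Qed.

Unset Implicit Arguments.

Theorem mainTheorem12 (epsp : bool) (N : nat) (lam : seq nat) (s : seq nat)
  (sigma : 'S_(size s)) :
  inP epsp N lam ->
  admissible epsp lam s ->
  (epsp = true -> N <> 2 * sumn s + 2) ->
  admissible epsp lam (permute_seq sigma).
Proof.
move=> HP A _.
have G : good lam by case/and4P: HP => S P _ _; rewrite /good S P.
apply: (adm_perm G _ A).
by rewrite perm_sym permute_perm.
Qed.
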